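(* Let $n\in\mathbb{N}$. If a finite set $X\subseteq\mathbb{N}$ is $\omega^{36n}$-large and exp-sparse, then it is $\mathrm{EM}$-$\omega^n$-large: for every colouring $P:[X]^2\to2$ there exists an $\omega^n$-large $Y\subseteq X$ such that $P$ is transitive on $[Y]^2$.
   Context: Ordinals below $\omega^\omega$ are in Cantor normal form; $\omega^j\cdot m$ = sum of $m$ copies of $\omega^j$. For $m\in\mathbb{N}$: $0[m]=0$, $(\beta+1)[m]=\beta$, $(\beta+\omega^{n})[m]=\beta+\omega^{n-1}\cdot m$ for $n\ge1$. A finite $X=\{x_0<\dots<x_{\ell-1}\}\subseteq\mathbb{N}$ is $\alpha$-large if $\alpha[x_0]\cdots[x_{\ell-1}]=0$. A set $X$ with $\min X\ge3$ is exp-sparse if $x<y$ in $X$ implies $4^x<y$. Pairs in $[Y]^2$ are ordered pairs $(x,y)$ with $x<y$; $P$ is transitive on $[Y]^2$ if both $\{(x,y):P(x,y)=0\}$ and $\{(x,y):P(x,y)=1\}$ restricted to $Y$ are transitive relations, i.e. for $x<y<z$ in $Y$, $P(x,y)=P(y,z)$ implies $P(x,z)=P(x,y)$. *)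

(* Defs.v *)
From mathcomp Require Import all_boot.
Set Implicit Arguments. Unset Strict Implicit. Unset Printing Implicit Defensive.

(* Ordinals below omega^omega in Cantor normal form:
   omega^{e_1} + ... + omega^{e_k} with e_1 >= ... >= e_k, represented as the
   (non-increasing) list of exponents [:: e_1; ...; e_k].  0 is [::]. *)
Definition ord := seq nat.

Definition cnf (a : ord) : bool := sorted geq a.

Definition omega_pow_mul (j m : nat) : ord := nseq m j.
Definition omega_pow (j : nat) : ord := [:: j].

(* Fundamental sequence a[m]:
   0[m] = 0, (b+1)[m] = b, (b + omega^(n+1))[m] = b + omega^n * m. *)
Definition fund (a : ord) (m : nat) : ord :=
  match rev a with
  | [::] => [::]
  | e :: rb =>
      match e with
      | 0 => rev rb
      | n.+1 => rev rb ++ omega_pow_mul n m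
      end
  end.

(* Finite subsets of nat are represented as strictly increasing lists. *)
Definition fin_set (X : seq nat) : bool := sorted ltn X.

Definition large (a : ord) (X : seq nat) : bool := foldl fund a X == [::].

Definition exp_sparse (X : seq nat) : Prop :=
  (forall x, x \in X -> 3 <= x) /\
  (forall x y, x \in X -> y \in X -> x < y -> 4 ^ x < y).

Definition transitive_on (P : nat -> nat -> bool) (Y : seq nat) : Prop :=
  forall x y z, x \in Y -> y \in Y -> z \in Y -> x < y -> y < z ->
    P x y = P y z -> P x z = P x y.

(* Main.v *)
Require Import Defs.
From mathcomp Require Import all_boot zify.
Set Implicit Arguments. Unset Strict Implicit. Unset Printing Implicit Defensive.

Lemma foldl_fund0 Z : foldl fund [::] Z = [::].
Proof. by elim: Z. Qed.

Lemma fund_rcons A s z :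
  fund (rcons A s) z = A ++ (if s is t.+1 then nseq z t else [::]).
Proof. by rewrite /fund rev_rcons; case: s => [|t]; rewrite revK ?cats0. Qed.

Lemma fund_cat a b m : b != [::] -> fund (a ++ b) m = a ++ fund b m.
Proof.
case/lastP: b => [//|b s] _.
by rewrite -rcons_cat !fund_rcons catA.
Qed.

Fixpoint ex (b : ord) (Y : seq nat) : bool :=
  match Y with
  | [::] => b == [::]
  | y :: Y' => (b != [::]) && ex (fund b y) Y'
  end.

Lemma ex_cat a b U V : ex b U -> ex a V -> ex (a ++ b) (U ++ V).
Proof.
elim: U b => [|u U IH] b /=; first by move/eqP->; rewrite cats0.
case/andP=> hb hU hV; apply/andP; split.
  by move: hb; rewrite -!size_eq0 size_cat; lia.
by rewrite fund_cat //; apply: IH.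
Qed.

Lemma ex_large b Y : ex b Y -> large b Y.
Proof. by rewrite /large; elim: Y b => [|y Y IH] b /=; [|case/andP=> _ /IH]. Qed.

Lemma large_ex b Y : large b Y -> exists U V, Y = U ++ V /\ ex b U.
Proof.
rewrite /large; elim: Y b => [|y Y IH] b /=.
  by move=> h; exists [::], [::]; split.
case: (eqVneq b [::]) => [->|hb]; first by exists [::], (y :: Y).
case/IH=> U [V [-> hU]]; exists (y :: U), V; split=> //=.
by rewrite hb.
Qed.

Lemma ex_split a b W : b != [::] -> ex (a ++ b) W ->
  exists U V, W = U ++ V /\ ex b U /\ ex a V.
Proof.
elim: W b => [|w W IH] b hb /=.
  by move: hb; rewrite -!size_eq0 size_cat; lia.
case/andP=> _; rewrite fund_cat //.
case: (eqVneq (fund b w) [::]) => [e|hf].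
  rewrite e cats0 => hW; exists [:: w], W; split=> //=; split=> //.
  by rewrite hb e.
case/(IH _ hf)=> U [V [-> [hU hV]]]; exists (w :: U), V; split=> //=.
by rewrite hb hU.
Qed.

Lemma ex_nil Y : ex [::] Y -> Y = [::].
Proof. by case: Y. Qed.

Lemma ex_ne b Y : ex b Y -> b != [::] -> Y != [::].
Proof. by case: Y => //= /eqP->. Qed.

Lemma nseqS' n (c : nat) : nseq n.+1 c = nseq n c ++ [:: c].
Proof. by rewrite -cat1s -[n.+1]addn1 nseqD. Qed.

Lemma ex_nseq_blocks n c W : ex (nseq n c) W ->
  exists Bs, [/\ size Bs = n, W = flatten Bs & forall B, B \in Bs -> ex [:: c] B].
Proof.
elim: n W => [|n IH] W.
  by move/ex_nil->; exists [::].
rewrite nseqS' => /ex_split-/(_ isT) [U [V [-> [hU /IH [Bs [hs -> hB]]]]]].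
exists (U :: Bs); split=> //=; first by rewrite hs.
by move=> B; rewrite inE => /orP[/eqP->|/hB].
Qed.

Lemma blocks_ex c Bs : (forall B, B \in Bs -> ex [:: c] B) ->
  ex (nseq (size Bs) c) (flatten Bs).
Proof.
elim: Bs => [|B Bs IH] // hB.
rewrite (_ : size (B :: Bs) = (size Bs).+1) // nseqS'.
rewrite (_ : flatten (B :: Bs) = B ++ flatten Bs) //; apply: ex_cat; first by apply: hB; rewrite mem_head.
by apply: IH => B' h; apply: hB; rewrite inE h orbT.
Qed.

Lemma ex_nseq_take n m c W : m <= n -> ex (nseq n c) W ->
  exists U V, W = U ++ V /\ ex (nseq m c) U.
Proof.
case: m => [|m] hmn; first by exists [::], W.
rewrite -(subnK hmn) nseqD => /ex_split-/(_ isT) [U [V [-> [hU _]]]].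
by exists U, V.
Qed.

Lemma ex_succ k y W : ex [:: k.+1] (y :: W) = ex (nseq y k) W.
Proof. by rewrite /= /fund /=. Qed.
Definition Rl (m : nat) (cB cA : nat -> nat) : Prop :=
  (forall i, cB i = cA i) \/
  exists j, [/\ forall i, j < i -> cB i = cA i, cB j < cA j &
                forall i, i < j -> cB i <= cA i + m].

Definition ext (s z i : nat) : nat := (0 < s) * (s.-1 == i) * z.

Lemma R_step m z (a b : nat -> nat) s t : m < z ->
  (forall i, i < s -> a i = 0) -> (forall i, i < t -> b i = 0) ->
  Rl m (fun i => b i + (t == i)) (fun i => a i + (s == i)) ->
  Rl z (fun i => b i + ext t z i) (fun i => a i + ext s z i).
Proof.
rewrite /ext => hmz ha hb [Heq|[j [H1 H2 H3]]].
  have hst : s = t.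
    case: (ltngtP s t) => // h.
      by have := Heq s; have := hb s h; lia.
    by have := Heq t; have := ha t h; lia.
  subst t; left => i; have := Heq i; lia.
have hsj : s <= j.
  by rewrite leqNgt; apply/negP => h; have := ha j h; lia.
right; case: (ltnP j t) => htj.
  exists t; split.
  - move=> i hi; have := H1 i; lia.
  - have := H1 t; lia.
  - move=> i hi; have := H1 i; have := hb i; lia.
case: (ltnP s j) => hsj'.
  exists j; split.
  - move=> i hi; have := H1 i; lia.
  - lia.
  - move=> i hi; have := H3 i; have := hb i; lia.
have hs : s = j by lia.
subst s.
case: (eqVneq t j) => [?|htj'].
  subst t; exists j; split.
  - move=> i hi; have := H1 i; lia.
  - lia.
  - move=> i hi; have := ha i; have := hb i; lia.
case: (ltnP (b j) (a j)) => hbj.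
  exists j; split.
  - move=> i hi; have := H1 i; lia.
  - lia.
  - move=> i hi; have := H3 i; have := ha i; have := hb i; lia.
have htj2 : t < j by rewrite ltn_neqAle htj' htj.
exists j.-1; split.
- move=> i hi; case: (ltngtP i j) => hij; [lia| |].
    by have := H1 i; lia.
  subst i; lia.
- have := H3 j.-1; have := ha j.-1; lia.
- move=> i hi; have := H3 i; have := ha i; have := hb i; lia.
Qed.

Lemma Rl_ext m f f' g g' : (forall i, f i = f' i) -> (forall i, g i = g' i) ->
  Rl m f g -> Rl m f' g'.
Proof.
move=> hf hg [h|[j [h1 h2 h3]]]; first by left=> i; rewrite -hf -hg.
right; exists j; split; rewrite -?hf -?hg //.
  by move=> i hi; rewrite -hf -hg h1.
by move=> i hi; rewrite -hf -hg h3.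
Qed.

Definition cnt (A : seq nat) (i : nat) := count_mem i A.

Lemma geq_trans' : transitive geq.
Proof. by move=> a b c h1 h2; apply: leq_trans h2 h1. Qed.

Lemma cnf_pw A : cnf A = pairwise geq A.
Proof. by rewrite /cnf sorted_pairwise //; exact: geq_trans'. Qed.

Lemma cnf_rcons A s : cnf (rcons A s) -> cnf A /\ (forall a, a \in A -> s <= a).
Proof.
rewrite !cnf_pw pairwise_rcons => /andP[/allP h ->]; split=> // a /h.
Qed.

Lemma cnt_rcons A s i : cnt (rcons A s) i = cnt A i + (s == i).
Proof. by rewrite /cnt -cats1 count_cat /= addn0. Qed.

Lemma cnt_fund A s z i : cnt (fund (rcons A s) z) i = cnt A i + ext s z i.
Proof.
rewrite fund_rcons /ext /cnt; case: s => [|t] /=; first by rewrite cats0 addn0.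
by rewrite count_cat count_nseq /= mul1n.
Qed.

Lemma cnf_fund A s z : cnf (rcons A s) -> cnf (fund (rcons A s) z).
Proof.
move=> /cnf_rcons [hA hs]; rewrite fund_rcons.
case: s hs => [|t] hs; first by rewrite cats0.
move: hA; rewrite !cnf_pw pairwise_cat => ->; rewrite andTb; apply/andP; split.
  apply/allrelP => a b /hs ha; rewrite mem_nseq => /andP[_ /eqP->].
  by rewrite /geq /=; apply: ltnW.
apply/(pairwiseP 0) => i j; rewrite -!topredE /= size_nseq => hi hj _.
by rewrite !nth_nseq hi hj /geq /=.
Qed.

Lemma cnt_low A s i : (forall a, a \in A -> s <= a) -> i < s -> cnt A i = 0.
Proof.
move=> h his; apply/count_memPn/negP => /h; lia.
Qed.

Lemma cnt_nil A : (forall i, cnt A i = 0) -> A = [::].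
Proof.
case: A => // a A /(_ a); rewrite /cnt /= eqxx; lia.
Qed.

Lemma large_cons A z Z : large A (z :: Z) = large (fund A z) Z.
Proof. by []. Qed.

Lemma large_nil Z : large [::] Z.
Proof. by rewrite /large foldl_fund0. Qed.

Lemma mono Z : forall A B m, pairwise ltn Z -> (forall z, z \in Z -> m < z) ->
  cnf A -> cnf B -> Rl m (cnt B) (cnt A) -> large A Z -> large B Z.
Proof.
elim: Z => [|z Z IH] A B m hZ hm hA hB hR.
  rewrite /large /= => /eqP hA0; subst A; apply/eqP/cnt_nil.
  case: hR => [h i|[j [_ h _]]]; first by rewrite h.
  by move: h; rewrite /cnt /=.
rewrite !large_cons.
case/lastP: B hB hR => [|B t] hB hR; first by rewrite /fund /= large_nil.
case/lastP: A hA hR => [|A s] hA hR.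
  case: hR => [h|[j [_ h _]]].
    by have := h t; rewrite cnt_rcons /cnt /= eqxx; lia.
  by move: h; rewrite /cnt /=.
move: hZ; rewrite pairwise_cons => /andP[/allP hz hZ].
apply: (IH _ _ z hZ); [by move=> w /hz | exact: cnf_fund | exact: cnf_fund | ].
have [_ hsA] := cnf_rcons hA; have [_ htB] := cnf_rcons hB.
apply: (@Rl_ext _ (fun i => cnt B i + ext t z i) _ (fun i => cnt A i + ext s z i)).
- by move=> i; rewrite cnt_fund.
- by move=> i; rewrite cnt_fund.
apply: R_step.
- by apply: hm; rewrite mem_head.
- by move=> i; apply: cnt_low.
- by move=> i; apply: cnt_low.
by apply: (Rl_ext _ _ hR) => i; rewrite cnt_rcons.
Qed.

Definition gap : rel nat := fun a b => a.+1 < b.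

Lemma R_side m (a' b' g' : nat -> nat) a b s :
  (forall i, i < a -> a' i = 0) -> (forall i, i < b -> b' i = 0) ->
  s <= a -> s <= b -> (a <= s \/ b <= s) ->
  (forall i, g' i + (s == i) = a' i + (a == i) + (b' i + (b == i))) ->
  Rl m.+1 (fun i => a' i + ext a m i + (b' i + (b == i))) (fun i => g' i + ext s m i).
Proof.
rewrite /ext => ha hb hsa hsb hs hg.
case: (leqP a b) => hab.
  have ? : s = a by lia.
  subst s; left => i; have := hg i; lia.
have ? : s = b by lia.
subst s; right; exists a; split.
- move=> i hi; have := hg i; lia.
- have := hg a; lia.
- move=> i hi; have := hg i; have := ha i; lia.
Qed.

Lemma cnf_fund' A z : cnf A -> cnf (fund A z).
Proof. by case/lastP: A => [|A s] // h; apply: cnf_fund. Qed.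

Lemma cnf_sort A : cnf (sort geq A).
Proof. by apply: sort_sorted => a b; apply: leq_total. Qed.

Lemma cnt_sort A i : cnt (sort geq A) i = cnt A i.
Proof. by rewrite /cnt count_sort. Qed.

Lemma cnt_cat A B i : cnt (A ++ B) i = cnt A i + cnt B i.
Proof. by rewrite /cnt count_cat. Qed.

Lemma gap_ltn X : pairwise gap X -> pairwise ltn X.
Proof. by apply: sub_pairwise => a b; rewrite /gap /=; lia. Qed.

Lemma side x X al be ga : pairwise gap (x :: X) -> cnf al -> cnf be -> cnf ga ->
  al != [::] -> be != [::] -> (forall i, cnt ga i = cnt al i + cnt be i) ->
  large ga (x :: X) -> large (sort geq (fund al x ++ be)) X.
Proof.
move=> hX; case/lastP: al => [//|al a] hal; case/lastP: be => [//|be b] hbe.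
case/lastP: ga => [|ga s] hga _ _ hc.
  by have := hc b; rewrite !cnt_rcons /cnt /=; lia.
rewrite large_cons; move: hX; rewrite pairwise_cons => /andP[/allP hx hX].
apply: (mono (m := x.+1) (gap_ltn hX)); first by move=> w /hx.
- exact: cnf_fund.
- exact: cnf_sort.
have [_ ha] := cnf_rcons hal; have [_ hb] := cnf_rcons hbe; have [_ hs] := cnf_rcons hga.
apply: (@Rl_ext _ (fun i => cnt al i + ext a x i + (cnt be i + (b == i)))
               _ (fun i => cnt ga i + ext s x i)).
- by move=> i; rewrite cnt_sort cnt_cat cnt_fund cnt_rcons.
- by move=> i; rewrite cnt_fund.
have hc' : forall i, cnt ga i + (s == i) = cnt al i + (a == i) + (cnt be i + (b == i)).
  by move=> i; have := hc i; rewrite !cnt_rcons.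
apply: R_side => //.
- by move=> i; apply: cnt_low.
- by move=> i; apply: cnt_low.
- rewrite leqNgt; apply/negP => h; have := hc' a; have := cnt_low hs h; lia.
- rewrite leqNgt; apply/negP => h; have := hc' b; have := cnt_low hs h; lia.
- case: (leqP a s) => h1; [by left|]; case: (leqP b s) => h2; [by right|].
  by have := hc' s; have := cnt_low ha h1; have := cnt_low hb h2; lia.
Qed.

Lemma part X : forall (col : pred nat) al be ga, pairwise gap X ->
  cnf al -> cnf be -> cnf ga -> (forall i, cnt ga i = cnt al i + cnt be i) ->
  large ga X -> large al (filter col X) \/ large be (filter (predC col) X).
Proof.
elim: X => [|x X IH] col al be ga hX hal hbe hga hc.
  rewrite /large /= => /eqP hg; subst ga; left; apply/eqP/cnt_nil => i.
  by have := hc i; rewrite /cnt /=; lia.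
case: (eqVneq al [::]) => [->|hal0]; first by left; apply: large_nil.
case: (eqVneq be [::]) => [->|hbe0]; first by right; apply: large_nil.
move=> hL; have hX' : pairwise gap X by move: hX; rewrite pairwise_cons => /andP[].
case hcx: (col x).
  have -> : filter col (x :: X) = x :: filter col X by rewrite /= hcx.
  have -> : filter (predC col) (x :: X) = filter (predC col) X by rewrite /= hcx.
  rewrite large_cons.
  apply: (IH col _ be (sort geq (fund al x ++ be)) hX') => //.
  - exact: cnf_fund'.
  - exact: cnf_sort.
  - by move=> i; rewrite cnt_sort cnt_cat.
  - exact: (side hX hal hbe hga hal0 hbe0 hc hL).
have -> : filter col (x :: X) = filter col X by rewrite /= hcx.
have -> : filter (predC col) (x :: X) = x :: filter (predC col) X by rewrite /= hcx.
rewrite large_cons.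
apply: (IH col al _ (sort geq (fund be x ++ al)) hX') => //.
- exact: cnf_fund'.
- exact: cnf_sort.
- by move=> i; rewrite cnt_sort cnt_cat addnC.
- by apply: (side hX hbe hal hga hbe0 hal0) => // i; rewrite hc addnC.
Qed.

Lemma cnf_nseq n c : cnf (nseq n c).
Proof.
rewrite cnf_pw; apply/(pairwiseP 0) => i j; rewrite -!topredE /= size_nseq => hi hj _.
by rewrite !nth_nseq hi hj /geq /=.
Qed.

Lemma cnt_nseq n c i : cnt (nseq n c) i = (c == i) * n.
Proof. by rewrite /cnt count_nseq. Qed.

Lemma pig L : forall (col : nat -> seq bool) X c, pairwise gap X ->
  (forall x, x \in X -> size (col x) = L) -> large (nseq (2 ^ L) c) X ->
  exists v, large [:: c] (filter (fun x => col x == v) X).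
Proof.
elim: L => [|L IH] col X c hX hs hL.
  exists [::]; rewrite (@eq_in_filter _ _ predT); first by rewrite filter_predT.
  by move=> x /hs /size0nil ->.
have hc : forall i, cnt (nseq (2 ^ L.+1) c) i = cnt (nseq (2 ^ L) c) i + cnt (nseq (2 ^ L) c) i.
  by move=> i; rewrite !cnt_nseq expnS; case: (c == i) => /=; lia.
have [h|h] := part (fun x => head false (col x)) hX (cnf_nseq _ _) (cnf_nseq _ _)
               (cnf_nseq _ _) hc hL.
  have [|v' hv] := IH (fun x => behead (col x)) _ c (pairwise_filter _ hX) _ h.
    by move=> x; rewrite mem_filter => /andP[_ /hs]; rewrite size_behead => ->.
  exists (true :: v'); rewrite -filter_predI in hv.
  rewrite (eq_in_filter (a2 := predI (fun x => behead (col x) == v') (fun x => head false (col x)))) //.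
  move=> x /hs; rewrite /=; case: (col x) => [|b r] //= _.
  by rewrite eqseq_cons andbC; case: b.
have [|v' hv] := IH (fun x => behead (col x)) _ c (pairwise_filter _ hX) _ h.
  by move=> x; rewrite mem_filter => /andP[_ /hs]; rewrite size_behead => ->.
exists (false :: v'); rewrite -filter_predI in hv.
rewrite (eq_in_filter (a2 := predI (fun x => behead (col x) == v') (predC (fun x => head false (col x))))) //.
move=> x /hs; rewrite /=; case: (col x) => [|b r] //= _.
by rewrite eqseq_cons andbC; case: b.
Qed.

Definition es (Z : seq nat) : bool :=
  pairwise (fun a b => 4 ^ a < b) Z && all (fun x => 0 < x) Z.

Lemma es_subseq Y Z : subseq Y Z -> es Z -> es Y.
Proof.
move=> hs /andP[hp ha]; apply/andP; split; first exact: subseq_pairwise hs hp.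
by apply/allP => x /(mem_subseq hs) /(allP ha).
Qed.

Lemma lt4 a : a < 4 ^ a.
Proof. by apply: ltn_expl. Qed.

Lemma es_gap Z : es Z -> pairwise gap Z.
Proof.
case/andP=> hp _; apply: sub_pairwise hp => a b /=; rewrite /gap.
by have := lt4 a; lia.
Qed.

Lemma es_ltn Z : es Z -> pairwise ltn Z.
Proof. by move=> /es_gap; apply: sub_pairwise => a b; rewrite /gap /=; lia. Qed.

Lemma trans_concat (P : nat -> nat -> bool) B Y w :
  transitive_on P B -> transitive_on P Y ->
  (forall a c, a \in B -> c \in Y -> a < c /\ P a c = w) ->
  transitive_on P (B ++ Y).
Proof.
move=> hB hY hBY x y z; rewrite !mem_cat.
case/orP=> hx; case/orP=> hy; case/orP=> hz hxy hyz; try (by apply: hB); try (by apply: hY).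
- move=> e; have [_ e1] := hBY _ _ hx hz; have [_ e2] := hBY _ _ hy hz.
  by rewrite e e1 e2.
- by have [h _] := hBY _ _ hz hy; lia.
- by move=> _; have [_ ->] := hBY _ _ hx hy; have [_ ->] := hBY _ _ hx hz.
- by have [h _] := hBY _ _ hy hx; lia.
- by have [h _] := hBY _ _ hy hx; lia.
- by have [h _] := hBY _ _ hz hy; lia.
Qed.

Definition Rb (P : nat -> nat -> bool) (B B' : seq nat) : bool :=
  all (fun a => all (fun c => (a < c) && (P a c == P (head 0 B) (head 0 B'))) B') B.

Fixpoint mh (T : eqType) (v : T -> T -> bool) (S : seq T) : Prop :=
  match S with
  | [::] => True
  | a :: S' => (forall b, b \in S' -> v a b = v a (head a S')) /\ mh v S'
  end.

Lemma chain (P : nat -> nat -> bool) S :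
  pairwise (Rb P) S -> mh (fun B B' => P (head 0 B) (head 0 B')) S ->
  (forall B, B \in S -> transitive_on P B) -> transitive_on P (flatten S).
Proof.
elim: S => [|B S IH] /=.
  by move=> _ _ _ x y z.
case/andP=> /allP hR hp [hm1 hm2] ht.
apply: (@trans_concat P B _ (P (head 0 B) (head 0 (head B S)))).
- by apply: ht; rewrite mem_head.
- by apply: IH => // B' hB'; apply: ht; rewrite inE hB' orbT.
move=> a c ha /flattenP [B' hB' hc].
have := hR _ hB'; move=> /allP /(_ _ ha) /allP /(_ _ hc) /andP[hac /eqP ->].
by split=> //; rewrite hm1.
Qed.

Lemma finmh (T : eqType) (v : T -> T -> bool) t : forall (h : T) R,
  2 ^ t <= (size R).+1 ->
  exists S', [/\ subseq S' R, size S' = t & mh v (h :: S')].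
Proof.
elim: t => [|t IH] h R hR.
  by exists [::]; split=> //; apply: sub0seq.
pose R1 := filter (v h) R; pose R0 := filter (predC (v h)) R.
have hsz : size R1 + size R0 = size R by rewrite !size_filter count_predC.
have [Rc [hRc hcst hsc]] : exists Rc, [/\ subseq Rc R,
    exists c, forall b, b \in Rc -> v h b = c & 2 ^ t <= size Rc].
  case: (leqP (2 ^ t) (size R1)) => h1.
    exists R1; split=> //; first exact: filter_subseq.
    by exists true => b; rewrite mem_filter => /andP[].
  exists R0; split=> //; first exact: filter_subseq.
    by exists false => b; rewrite mem_filter => /andP[/negbTE].
  by move: hR; rewrite expnS; lia.
case: Rc hRc hcst hsc => [|h' R'] hRc [c hc] hsc.
  by move: hsc; rewrite /=; have := expn_gt0 2 t; lia.
have [S'' [hs1 hs2 hs3]] := IH h' R' hsc.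
exists (h' :: S''); split=> //=; last first.
  split=> // b hb; rewrite !hc //; first by rewrite mem_head.
  by move: hb; rewrite inE => /orP[/eqP->|/(mem_subseq hs1) hb]; rewrite ?mem_head // inE hb orbT.
- by rewrite hs2.
apply: subseq_trans hRc; by rewrite /= eqxx.
Qed.

Lemma subseq_flatten (S T : seq (seq nat)) : subseq S T -> subseq (flatten S) (flatten T).
Proof.
elim: T S => [|t T IH] [|s S] //=; try by rewrite sub0seq.
case: (eqVneq s t) => [->|hst].
  by move/IH => h; apply: cat_subseq.
move/IH => h; apply: subseq_trans h _; apply: suffix_subseq.
Qed.

Lemma size_bound s p : uniq s -> (forall x, x \in s -> 0 < x <= p) -> size s <= p.
Proof.
move=> hu hs; have := uniq_leq_size hu (s2 := iota 1 p).
rewrite size_iota; apply=> x /hs hx; rewrite mem_iota; lia.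
Qed.

Lemma max_in s : s != [::] -> exists2 q, q \in s & forall x, x \in s -> x <= q.
Proof.
elim: s => [//|a [|b s] IH] _.
  by exists a; rewrite ?mem_head // => x; rewrite inE => /eqP->.
have [q hq hm] := IH isT.
case: (leqP a q) => haq.
  exists q; first by rewrite inE hq orbT.
  by move=> x; rewrite inE => /orP[/eqP->|/hm].
exists a; first by rewrite mem_head.
move=> x; rewrite inE => /orP[/eqP->//|/hm]; lia.
Qed.

Lemma es_cross A B a b : es (A ++ B) -> a \in A -> b \in B -> 4 ^ a < b.
Proof.
case/andP; rewrite pairwise_cat => /andP[/allrelP h _] _ ha hb.
exact: h.
Qed.

Lemma blocks (P : nat -> nat -> bool) k
  (IH : forall Q, es Q -> large [:: 3 * k] Q ->
          exists C, [/\ subseq C Q, ex [:: k] C & transitive_on P C]) :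
  forall Ds pre, es (pre ++ flatten Ds) ->
  (forall D, D \in Ds -> ex [:: (3 * k).+1] D) ->
  (exists2 p, p \in pre & size Ds <= p) ->
  exists Cs, [/\ size Cs = size Ds, subseq (flatten Cs) (flatten Ds),
    (forall C, C \in Cs -> ex [:: k] C /\ transitive_on P C),
    pairwise (Rb P) Cs &
    (forall f C c, f \in pre -> C \in Cs -> c \in C -> P f c = P f (head 0 C))].
Proof.
elim=> [|D Ds IHD] pre hes hD [p hp hpD].
  by exists [::]; split.
have hD1 : ex [:: (3 * k).+1] D by apply: hD; rewrite mem_head.
have [Cs' [hs1 hs2 hs3 hs4 hs5]] : exists Cs', [/\ size Cs' = size Ds,
    subseq (flatten Cs') (flatten Ds),
    (forall C, C \in Cs' -> ex [:: k] C /\ transitive_on P C),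
    pairwise (Rb P) Cs' &
    (forall f C c, f \in pre ++ D -> C \in Cs' -> c \in C -> P f c = P f (head 0 C))].
  apply: IHD.
  - by rewrite -catA.
  - by move=> D' h; apply: hD; rewrite inE h orbT.
  - by exists p; [rewrite mem_cat hp | move: hpD => /=; lia].
clear hD; case: D hD1 hes hpD hs5 => [//|d W] hD1 hes hpD hs5.
pose col := fun a => [seq P f a | f <- pre] ++ [seq P a (head 0 C) | C <- Cs'].
pose L := size pre + size Ds.
have hL : 2 ^ L <= d.
  have pre0 : pre != [::] by case: (pre) hp.
  have [q hq hqm] := max_in pre0.
  have h4 : 4 ^ q < d.
    by apply: (es_cross hes hq); rewrite /= mem_head.
  have hsp : size pre <= q.
    apply: size_bound.
      by apply: (@pairwise_uniq _ ltn) => //; [exact: ltnn|];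
         apply: (subseq_pairwise (prefix_subseq _ _) (es_ltn hes)).
    move=> x hx; rewrite hqm // andbT.
    by move: hes => /andP[_ /allP]; apply; rewrite mem_cat hx.
  have hpq := hqm _ hp.
  have : 2 ^ L <= 2 ^ (2 * q) by rewrite leq_exp2l //; rewrite /L /=; move: hpD => /=; lia.
  by rewrite expnM => h; apply: leq_trans h _; apply: ltnW.
move: hD1; rewrite ex_succ => hW.
have [U [V [eW hU]]] := ex_nseq_take hL hW.
have hDsub : subseq U (d :: W) by rewrite eW; apply: subseq_trans (prefix_subseq U V) (subseq_cons _ _).
have hesD : es (d :: W).
  apply: es_subseq hes; apply: subseq_trans (suffix_subseq pre _).
  exact: (prefix_subseq (d :: W) (flatten Ds)).
have hesU : es U := es_subseq hDsub hesD.
have [|v hv] := pig (col := col) (es_gap hesU) _ (ex_large hU).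
  by move=> x _; rewrite size_cat !size_map hs1.
set Q := filter _ U in hv.
have hQU : subseq Q U by apply: filter_subseq.
have [C [hCQ hCex hCt]] := IH Q (es_subseq hQU hesU) hv.
have hCne : C != [::] by apply: (ex_ne hCex).
have hCcol : forall c, c \in C -> col c = v.
  by move=> c /(mem_subseq hCQ); rewrite mem_filter => /andP[/eqP].
have hhead : head 0 C \in C by case: (C) hCne => //= c C' _; rewrite mem_head.
have hcol2 : forall a, a \in C -> col a = col (head 0 C).
  by move=> a ha; rewrite !hCcol.
have hCD : subseq C (d :: W) := subseq_trans hCQ (subseq_trans hQU hDsub).
exists (C :: Cs'); split.
- by rewrite /= hs1.
- exact: cat_subseq hCD hs2.
- by move=> C'; rewrite inE => /orP[/eqP->|/hs3].
- rewrite pairwise_cons hs4 andbT; apply/allP => C' hC'.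
  apply/allP => a ha; apply/allP => c hc; apply/andP; split.
    have hcD : c \in flatten Ds by apply: (mem_subseq hs2); apply/flattenP; exists C'.
    have haD : a \in d :: W by apply: (mem_subseq hCD).
    have hes' : es ((pre ++ d :: W) ++ flatten Ds) by rewrite -catA.
    have haD' : a \in pre ++ d :: W by rewrite mem_cat haD orbT.
    exact: ltn_trans (lt4 a) (es_cross hes' haD' hcD).
  have haDc : a \in pre ++ d :: W by rewrite mem_cat (mem_subseq hCD) ?orbT.
  rewrite (hs5 a C' c haDc hC' hc); apply/eqP.
  have := hcol2 _ ha; rewrite /col => /eqP; rewrite eqseq_cat ?size_map //.
  by case/andP=> _ /eqP /eq_in_map /(_ _ hC') ->.
- move=> f C' c hf; rewrite inE => /orP[/eqP->|hC'] hc.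
    have := hcol2 _ hc; rewrite /col => /eqP; rewrite eqseq_cat ?size_map //.
    by case/andP=> /eqP /eq_in_map /(_ _ hf) -> _.
  by apply: hs5 => //; rewrite mem_cat hf.
Qed.

Lemma ex_pos_split j z W : 0 < z -> ex (nseq z j) W ->
  exists E W2, W = E ++ W2 /\ ex [:: j] E.
Proof.
case: z => [//|z] _; rewrite nseqS' => /ex_split-/(_ isT) [E [W2 [-> [hE _]]]].
by exists E, W2.
Qed.

Lemma es_head z W : es (z :: W) -> 0 < z.
Proof. by case/andP=> _ /andP[]. Qed.

Lemma build (P : nat -> nat -> bool) k : forall Z, es Z -> large [:: 3 * k] Z ->
  exists Y, [/\ subseq Y Z, ex [:: k] Y & transitive_on P Y].
Proof.
elim: k => [|k IHk] Z hes.
  case: Z hes => [|z Z] hes; first by rewrite /large.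
  move=> _; exists [:: z]; split=> //.
  - by rewrite sub1seq mem_head.
  - by move=> x y w; rewrite !inE => /eqP-> /eqP-> _; lia.
rewrite (_ : 3 * k.+1 = (3 * k + 2).+1); last by lia.
case/large_ex => Z0 [R0 [eZ hZ0]].
case: Z0 eZ hZ0 => [//|y W] eZ; rewrite ex_succ => hW.
have hesZ0 : es (y :: W) by apply: es_subseq hes; rewrite eZ prefix_subseq.
have [E1 [W2 [eW hE1]]] := ex_pos_split (es_head hesZ0) hW.
case: E1 eW hE1 => [//|e W1] eW; rewrite (_ : 3 * k + 2 = (3 * k).+1.+1); last by lia.
rewrite ex_succ => hW1.
have hye : 4 ^ y < e.
  by apply: (es_cross (A := [:: y]) (B := W) hesZ0); rewrite ?mem_head // eW mem_head.
have hM : 2 ^ y <= e.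
  have h24 : 2 ^ y <= 4 ^ y by rewrite leq_exp2r // (es_head hesZ0).
  lia.
have [U [V [eW1 hU]]] := ex_nseq_take hM hW1.
have [Ds [hsD eU hDs]] := ex_nseq_blocks hU.
have hZe : Z = [:: y, e & flatten Ds] ++ (V ++ W2 ++ R0).
  by rewrite eZ eW eW1 eU /= -!catA.
have hes1 : es ([:: y; e] ++ flatten Ds).
  by apply: es_subseq hes; rewrite hZe prefix_subseq.
have hpe : exists2 p, p \in [:: y; e] & size Ds <= p.
  by exists e; [rewrite !inE eqxx orbT | rewrite hsD].
have [Cs [hs1 hs2 hs3 hs4 hs5]] := blocks IHk hes1 hDs hpe.
have hszC : 2 ^ y <= (size Cs).+1 by rewrite hs1 hsD.
have [S' [hS1 hS2 hS3]] := finmh (fun B B' => P (head 0 B) (head 0 B')) [:: y] hszC.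
exists (flatten ([:: y] :: S')); split.
- have hyD : subseq ([:: y] ++ flatten Ds) Z.
    rewrite hZe; apply: (@cat_subseq _ [:: y] _ [:: y]); first exact: subseq_refl.
    exact: subseq_trans (subseq_cons (flatten Ds) e) (prefix_subseq _ _).
  have hyS : subseq ([:: y] ++ flatten S') ([:: y] ++ flatten Ds).
    exact: cat_subseq (subseq_refl _) (subseq_trans (subseq_flatten hS1) hs2).
  exact: subseq_trans hyS hyD.
- rewrite (_ : flatten ([:: y] :: S') = y :: flatten S') // ex_succ -hS2; apply: blocks_ex => B /(mem_subseq hS1) /hs3 [].
  by [].
- apply: chain => //.
  + apply: (subseq_pairwise (ys := [:: y] :: Cs)); first by rewrite /= eqxx.
    rewrite pairwise_cons hs4 andbT; apply/allP => C hC /=.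
    rewrite /Rb /= andbT; apply/allP => c hc; apply/andP; split.
      apply: ltn_trans (lt4 y) _; apply: (es_cross hes1); first by rewrite mem_head.
      by apply: (mem_subseq hs2); apply/flattenP; exists C.
    by apply/eqP; apply: hs5 => //; rewrite mem_head.
  + move=> B; rewrite inE => /orP[/eqP->|/(mem_subseq hS1) /hs3 [] //].
    by move=> x y' w; rewrite !inE => /eqP-> /eqP-> _; lia.
Qed.

Lemma down d j : forall Z, es Z -> ex [:: j + d] Z ->
  exists Z', subseq Z' Z /\ ex [:: j] Z'.
Proof.
elim: d => [|d IH] Z hes; first by rewrite addn0 => h; exists Z.
rewrite addnS; case: Z hes => [//|z W] hes; rewrite ex_succ => hW.
have [E [W2 [eW hE]]] := ex_pos_split (es_head hes) hW.
have hsub : subseq E (z :: W).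
  rewrite eW; exact: subseq_trans (prefix_subseq E W2) (subseq_cons _ z).
have [Z' [h1 h2]] := IH E (es_subseq hsub hes) hE.
by exists Z'; split=> //; apply: subseq_trans h1 hsub.
Qed.

Theorem theorem2p10 (n : nat) (X : seq nat) :
  fin_set X -> large (omega_pow (36 * n)) X -> exp_sparse X ->
  forall P : nat -> nat -> bool,
  exists Y : seq nat,
    [/\ fin_set Y, {subset Y <= X}, large (omega_pow n) Y & transitive_on P Y].
Proof.
move=> hfin hL [h3 hsp] P.
have hltn : pairwise ltn X by rewrite /fin_set sorted_pairwise in hfin => //; exact: ltn_trans.
have hes : es X.
  apply/andP; split.
    have hall : all (mem X) X by apply/allP.
    apply: (sub_in_pairwise (P := mem X) (r := ltn) _ hall hltn).
    by move=> a b ha hb /= hab; apply: hsp.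
  by apply/allP => x /h3; lia.
have [Z0 [R0 [eX hZ0]]] := large_ex hL.
have hZ0s : subseq Z0 X by rewrite eX prefix_subseq.
rewrite (_ : 36 * n = 3 * n + 33 * n) in hZ0; last by lia.
have [Z1 [hZ1 hex1]] := down (es_subseq hZ0s hes) hZ0.
have hZ1s := subseq_trans hZ1 hZ0s.
have [Y [hY1 hY2 hY3]] := build P (es_subseq hZ1s hes) (ex_large hex1).
have hYs := subseq_trans hY1 hZ1s.
exists Y; split=> //.
- by rewrite /fin_set sorted_pairwise; [exact: subseq_pairwise hYs hltn | exact: ltn_trans].
- by move=> x; apply: mem_subseq.
- exact: ex_large.
Qed.
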